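(* Let $k\ge 0$ and $n>3k$ be integers. Then the set of maximal simplices of $\mathrm{VR}(T_{n,n};k)$ equals $M_{n,k}=\{\pi_n(\sigma):\sigma \text{ a maximal simplex of } \mathrm{VR}(\mathbb{Z}^2;k)\}$.
   Context: $\mathbb{Z}^2$ carries the $l^1$ metric. $T_{n,n}=\mathbb{Z}^2/(n\mathbb{Z}\times n\mathbb{Z})$ with quotient map $\pi_n$ (reduction mod $n$) and quotient metric $d([x],[y])=\min\{d(x',y'):\pi_n(x')=[x],\pi_n(y')=[y]\}$. $\mathrm{VR}(X;r)$ is the simplicial complex on $X$ whose simplices are the finite nonempty subsets of diameter at most $r$; a maximal simplex is one not properly contained in another. *)

(* Defs.v *)
From HB Require Import structures.
From mathcomp Require Import all_boot all_order all_algebra.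
From mathcomp Require Import finmap.
Set Implicit Arguments. Unset Strict Implicit. Unset Printing Implicit Defensive.
Import Order.TTheory GRing.Theory Num.Theory.
Local Open Scope ring_scope.
Local Open Scope fset_scope.

Definition Z2 := (int * int)%type.

Definition l1 (x y : Z2) : int := `|x.1 - y.1| + `|x.2 - y.2|.

(* Torus T_{n,n} = Z^2 / (nZ x nZ), points represented by residues in 'I_n. *)
Definition torus (n : nat) := ('I_n * 'I_n)%type.

Definition proj_to (n : nat) (x : Z2) (a : torus n) : bool :=
  ((x.1 %% n%:Z)%Z == (a.1 : nat)%:Z) && ((x.2 %% n%:Z)%Z == (a.2 : nat)%:Z).

(* quotient metric: d([x],[y]) <= r iff some lifts are at l1 distance <= r
   (the min over lifts of a nonnegative-integer valued distance is attained) *)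
Definition tdist_le (n : nat) (a b : torus n) (r : nat) : Prop :=
  exists x y : Z2, proj_to x a /\ proj_to y b /\ l1 x y <= r%:Z.

Definition VR_Z2_simplex (r : nat) (s : {fset Z2}) : Prop :=
  s != fset0 /\ (forall x y, x \in s -> y \in s -> l1 x y <= r%:Z).

Definition VR_Z2_maximal (r : nat) (s : {fset Z2}) : Prop :=
  VR_Z2_simplex r s /\ (forall t, VR_Z2_simplex r t -> ~~ (s `<` t)).

Definition VR_T_simplex (n r : nat) (A : {set torus n}) : Prop :=
  A != set0 /\ (forall a b, a \in A -> b \in A -> tdist_le a b r).

Definition VR_T_maximal (n r : nat) (A : {set torus n}) : Prop :=
  VR_T_simplex r A /\ (forall B, VR_T_simplex r B -> ~~ (A \proper B)).

Definition proj_set (n : nat) (s : {fset Z2}) : {set torus n} :=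
  [set a | [exists x : s, proj_to (val x) a]].

(* Main.v *)
Require Import Defs.
From HB Require Import structures.
From mathcomp Require Import all_boot all_order all_algebra.
From mathcomp Require Import finmap.
From mathcomp Require Import zify ring.
Local Open Scope fset_scope.

Section Helpers.
Import Order.TTheory GRing.Theory Num.Theory.
Local Open Scope ring_scope.

Lemma modeq_eq {x y : int} {n : nat} : (0 < n)%N -> (x %% n%:Z)%Z = (y %% n%:Z)%Z ->
  `|x - y| < n%:Z -> x = y.
Proof. move=> n0 e. have := divz_eq x n. have := divz_eq y n. rewrite e.
move: (x %/ n)%Z (y %/ n)%Z (y %% n)%Z => q1 q2 r -> ->.
have [->|ne] := eqVneq q2 q1; first by [].
move=> h; exfalso. have : (q2 - q1 >= 1) \/ (q1 - q2 >= 1) by lia. nia. Qed.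

Lemma modeq_shift (x y z : int) (n : nat) : (x %% n%:Z)%Z = (y %% n%:Z)%Z ->
  ((z + (x - y)) %% n%:Z)%Z = (z %% n%:Z)%Z.
Proof. move=> e. rewrite {1}(divz_eq x n) {1}(divz_eq y n) e.
have -> : z + ((x %/ n)%Z * n + (y %% n)%Z - ((y %/ n)%Z * n + (y %% n)%Z))
   = ((x %/ n)%Z - (y %/ n)%Z) * n + z by ring.
by rewrite modzMDl. Qed.

Lemma l1_sym x y : l1 x y = l1 y x.
Proof. by rewrite /l1 (distrC x.1) (distrC x.2). Qed.

Lemma l1_tri x y z : l1 x z <= l1 x y + l1 y z.
Proof. rewrite /l1. have := ler_distD y.1 x.1 z.1. have := ler_distD y.2 x.2 z.2. lia. Qed.

Lemma proj_fun {n x} {a b : torus n} : proj_to x a -> proj_to x b -> a = b.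
Proof.
case: a b => [a1 a2] [b1 b2]; rewrite /proj_to /=.
move=> /andP[/eqP h1 /eqP h2] /andP[/eqP h3 /eqP h4].
move: h1 h2; rewrite h3 h4 => -[] e1 [] e2.
by congr pair; apply/val_inj.
Qed.

Lemma proj_ex {n} (x : Z2) : (0 < n)%N -> exists a : torus n, proj_to x a.
Proof.
case: n => // m _.
exists (inord (absz (x.1 %% m.+1%:Z)%Z), inord (absz (x.2 %% m.+1%:Z)%Z)).
have g1 := modz_ge0 x.1 (isT : m.+1%:Z != 0).
have g2 := modz_ge0 x.2 (isT : m.+1%:Z != 0).
have l1' := ltz_pmod x.1 (isT : 0 < m.+1%:Z).
have l2' := ltz_pmod x.2 (isT : 0 < m.+1%:Z).
rewrite /proj_to /= !inordK.
- by apply/andP; split; apply/eqP; lia.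
- lia.
- lia.
Qed.

Lemma lift_ex {n} (a : torus n) : exists x, proj_to x a.
Proof.
exists ((a.1 : nat)%:Z, (a.2 : nat)%:Z).
have h1 := ltn_ord a.1; have h2 := ltn_ord a.2.
by rewrite /proj_to /= !modz_small //; apply/andP; split; lia.
Qed.

Lemma proj_eq {n x y} {a : torus n} : (0 < n)%N -> proj_to x a -> proj_to y a ->
  l1 x y < n%:Z -> x = y.
Proof.
move=> n0 /andP[/eqP h1 /eqP h2] /andP[/eqP h3 /eqP h4]; rewrite /l1 => d.
case: x y h1 h2 h3 h4 d => [x1 x2] [y1 y2] /= h1 h2 h3 h4 d.
have e1 : x1 = y1.
  apply: (modeq_eq n0); first by rewrite h1 h3.
  have := normr_ge0 (x2 - y2); lia.
have e2 : x2 = y2.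
  apply: (modeq_eq n0); first by rewrite h2 h4.
  have := normr_ge0 (x1 - y1); lia.
by rewrite e1 e2.
Qed.

Definition shift (x x' y : Z2) : Z2 := (y.1 + (x'.1 - x.1), y.2 + (x'.2 - x.2)).

Lemma proj_shift {n x x' y} {a b : torus n} :
  proj_to x a -> proj_to x' a -> proj_to y b -> proj_to (shift x x' y) b.
Proof.
move=> /andP[/eqP h1 /eqP h2] /andP[/eqP h3 /eqP h4] /andP[/eqP h5 /eqP h6].
rewrite /proj_to /shift /= !modeq_shift ?h5 ?h6 ?eqxx //.
- by rewrite h2 h4.
- by rewrite h1 h3.
Qed.

Lemma l1_shift x x' y : l1 x' (shift x x' y) = l1 x y.
Proof.
rewrite /l1 /shift /=.
have -> : x'.1 - (y.1 + (x'.1 - x.1)) = x.1 - y.1 by ring.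
have -> : x'.2 - (y.2 + (x'.2 - x.2)) = x.2 - y.2 by ring.
done.
Qed.

Lemma proj_setP n (s : {fset Z2}) (a : torus n) :
  reflect (exists2 x, x \in s & proj_to x a) (a \in proj_set n s).
Proof.
rewrite inE; apply: (iffP existsP) => [[x h]|[x xs h]].
- by exists (val x) => //; exact: fsvalP.
- by exists [` xs].
Qed.

Lemma lift_simplex {n k} (hn : (3 * k < n)%N) (A : {set torus n}) :
  VR_T_simplex k A -> forall a0 x0, a0 \in A -> proj_to x0 a0 ->
  exists t : {fset Z2}, [/\ VR_Z2_simplex k t, proj_set n t = A &
     forall y, y \in t -> l1 x0 y <= k%:Z].
Proof.
move=> [A0 HA] a0 x0 a0A px0.
have n0 : (0 < n)%N by lia.
have hf : forall a : torus n, exists y : Z2,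
    a \in A -> proj_to y a /\ l1 x0 y <= k%:Z.
  move=> a; case: (boolP (a \in A)) => aA; last by exists x0.
  have [x' [y' [p1 [p2 d]]]] := HA a0 a a0A aA.
  exists (shift x' x0 y') => _; split; first exact: proj_shift p1 px0 p2.
  by rewrite l1_shift.
have [f Hf] := fin_all_exists hf.
pose t := seq_fset tt [seq f a | a <- enum A].
have tP y : reflect (exists2 a, a \in A & y = f a) (y \in t).
  rewrite seq_fsetE; apply: (iffP mapP) => [[a]|[a]]; rewrite ?mem_enum => aA ->;
  by exists a; rewrite ?mem_enum.
exists t; split.
- split.
  + by apply/fset0Pn; exists (f a0); apply/tP; exists a0.
  + move=> y z /tP[a aA ->] /tP[b bA ->].
    have [pa da] := Hf a aA; have [pb db] := Hf b bA.
    have [x' [y' [p1 [p2 d]]]] := HA a b aA bA.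
    have ps := proj_shift p1 pa p2.
    have ls := l1_shift x' (f a) y'.
    have -> : f b = shift x' (f a) y'.
      apply: (proj_eq n0 pb ps).
      have h1 := l1_tri (f b) x0 (shift x' (f a) y').
      have h2 := l1_tri x0 (f a) (shift x' (f a) y').
      rewrite (l1_sym (f b) x0) in h1; rewrite ls in h2. lia.
    by rewrite ls.
- apply/setP => a; apply/idP/idP.
  + move=> /proj_setP[y /tP[b bA ->] pb].
    have [pb' _] := Hf b bA.
    by rewrite (proj_fun pb pb').
  + move=> aA; apply/proj_setP; exists (f a); first by apply/tP; exists a.
    by have [] := Hf a aA.
- by move=> y /tP[a aA ->]; have [] := Hf a aA.
Qed.

Lemma lt_k_n {k n : nat} (hn : (3 * k < n)%N) (z : int) : z <= k%:Z -> z < n%:Z.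
Proof. lia. Qed.
Lemma lt_2k_n {k n : nat} (hn : (3 * k < n)%N) (a b c : int) :
  a <= b + c -> b <= k%:Z -> c <= k%:Z -> a < n%:Z.
Proof. lia. Qed.

End Helpers.

Theorem lemma5p6 (k n : nat) (hn : 3 * k < n) (A : {set torus n}) :
  VR_T_maximal k A <-> exists s : {fset Z2}, VR_Z2_maximal k s /\ A = proj_set n s.
Proof.
have n0 : (0 < n)%N by lia.
split.
- move=> [[A0 HA] Amax].
  have /set0Pn [a0 a0A] := A0. have [x0 px0] := lift_ex a0.
  have [t [[t0 Ht] tA tb]] := lift_simplex hn _ (conj A0 HA) _ _ a0A px0.
  exists t; split; last by rewrite tA.
  split; first by split.
  move=> u [u0 Hu]; apply/negP => tu.
  have tsu : t `<=` u by exact: fproper_sub.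
  have /fsubsetPn [y yu yt] : ~~ (u `<=` t) by move: tu; rewrite fproperE => /andP[].
  have [b pb] := proj_ex y n0.
  have Bs : VR_T_simplex k (proj_set n u).
    split; first by apply/set0Pn; exists b; apply/proj_setP; exists y.
    move=> a b' /proj_setP[x xu px] /proj_setP[z zu pz].
    by exists x, z; split; [|split]; [| |apply: Hu].
  have AB : A \subset proj_set n u.
    apply/subsetP => a; rewrite -tA => /proj_setP [x xt px]; apply/proj_setP.
    by exists x => //; exact: (fsubsetP tsu).
  have := Amax _ Bs; rewrite properE AB /= negbK => BA.
  have : b \in A by apply: (subsetP BA); apply/proj_setP; exists y.
  rewrite -tA => /proj_setP [x xt px].
  have xy : x = y.
    apply: (proj_eq n0 px pb).
    have xu : x \in u by apply: (fsubsetP tsu).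
    exact: (lt_k_n hn _ (Hu x y xu yu)).
  by move: yt; rewrite -xy xt.
- move=> [s [[[s0 Hs] smax] ->]].
  have Hsimp : VR_T_simplex k (proj_set n s).
    split.
      have /fset0Pn [x xs] := s0. have [a pa] := proj_ex x n0.
      by apply/set0Pn; exists a; apply/proj_setP; exists x.
    move=> a b /proj_setP[x xs px] /proj_setP[y ys py].
    by exists x, y; split; [|split]; [| |apply: Hs].
  split => // B HB; apply/negP; rewrite properE => /andP[AB nBA].
  have /fset0Pn [x0 x0s] := s0. have [a0 pa0] := proj_ex x0 n0.
  have a0B : a0 \in B by apply: (subsetP AB); apply/proj_setP; exists x0.
  have [t [tS tB tb]] := lift_simplex hn _ HB _ _ a0B pa0.
  apply: (negP (smax t tS)). rewrite fproperE; apply/andP; split.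
  + apply/fsubsetP => x xs. have [a pa] := proj_ex x n0.
    have : a \in B by apply: (subsetP AB); apply/proj_setP; exists x.
    rewrite -tB => /proj_setP [y yt py].
    suff -> : x = y by [].
    apply: (proj_eq n0 pa py).
    have h3 := tb y yt; have h2 := Hs x0 x x0s xs; have h1 := l1_tri x x0 y.
    rewrite (l1_sym x x0) in h1. exact: (lt_2k_n hn _ _ _ h1 h2 h3).
  + apply/fsubsetPn. have /subsetPn [b bB bA] := nBA.
    move: bB; rewrite -tB => /proj_setP [y yt py].
    exists y => //. apply/negP => ys; move/negP: bA; apply; apply/proj_setP; by exists y.
Qed.
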